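(* Let $G=(V,E)$ be a directed graph on $n$ nodes in which every node has a self-loop, let $P$ be an $n\times n$ right stochastic matrix supported on the edges of $G$, let $D$ be diagonal with entries $D_{uu}=p_{uu'}\in[0,1]$, $\tilde P=(\mathbf I_n-D)P$, $p^{(t)}_{uv}=(P^t)_{uv}$, $\tilde p^{(t)}_{uv}=(\tilde P^t)_{uv}$. For $u\neq w$ define $\pi_{uw}=\sum_{t\ge1}\tilde p^{(t)}_{uw}\,p_{ww'}$. Then for all $u\neq w$ in $V$, $$(1-p_{uu'})\Big(\sum_{t\ge1}\big(\min_{x\in V}(1-p_{xx'})\big)^{t-1}p^{(t)}_{uw}\Big)p_{ww'}\ \le\ \pi_{uw}\ \le\ (1-p_{uu'})\Big(\sum_{t\ge1}\big(\max_{x\in V}(1-p_{xx'})\big)^{t-1}p^{(t)}_{uw}\Big)p_{ww'}.$$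
   Context: $p_{uu'}$ is the probability that a random walker at $u$ is absorbed at an auxiliary absorbing node $u'$; $\pi_{uw}$ is the probability that a walker started at $u$ is eventually absorbed at (the auxiliary node of) $w$. *)

(* Defs.v *)
From HB Require Import structures.
From mathcomp Require Import all_boot all_order all_algebra.
From mathcomp Require Import all_classical all_reals.
From mathcomp Require Import ereal sequences.
Set Implicit Arguments. Unset Strict Implicit. Unset Printing Implicit Defensive.
Import Order.TTheory GRing.Theory Num.Theory.
Local Open Scope ring_scope.

Definition has_self_loops n (e : rel 'I_n) : Prop := forall u, e u u.

Definition right_stochastic (R : realType) n (P : 'M[R]_n) : Prop :=
  (forall u v, 0 <= P u v) /\ (forall u, \sum_v P u v = 1).

Definition supported_on (R : realType) n (P : 'M[R]_n) (e : rel 'I_n) : Prop :=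
  forall u v, P u v != 0 -> e u v.

(* D = diag(p_{uu'}), given by the vector of absorption probabilities d *)
Definition Dmat (R : realType) n (d : 'I_n -> R) : 'M[R]_n :=
  diag_mx (\row_u d u).

Definition Ptilde (R : realType) n (P : 'M[R]_n) (d : 'I_n -> R) : 'M[R]_n :=
  (1%:M - Dmat d) *m P.

Definition absorb_prob (R : realType) n (P : 'M[R]_n) (d : 'I_n -> R)
    (u w : 'I_n) : \bar R :=
  (\sum_(1 <= t <oo) (((Ptilde P d) ^+ t) u w)%:E * (d w)%:E)%E.

(* Main.v *)
Require Import Defs.
From HB Require Import structures.
From mathcomp Require Import all_boot all_order all_algebra.
From mathcomp Require Import all_classical all_reals.
From mathcomp Require Import ereal sequences.
From mathcomp Require Import ring.
Import Order.TTheory GRing.Theory Num.Theory.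
Local Open Scope ring_scope.

Section S.
Variables (R : realType) (n : nat) (P : 'M[R]_n) (d : 'I_n -> R).
Hypothesis P0 : forall u v, 0 <= P u v.
Hypothesis d01 : forall x, 0 <= d x <= 1.

Lemma PtE x z : Ptilde P d x z = (1 - d x) * P x z.
Proof.
rewrite /Ptilde /Dmat mulmxBl mul1mx mul_diag_mx !mxE.
by rewrite mulrBl mul1r.
Qed.

Lemma Pt0 x z : 0 <= Ptilde P d x z.
Proof. by rewrite PtE mulr_ge0 // subr_ge0; case/andP: (d01 x). Qed.

Lemma expP0 t x y : 0 <= (P ^+ t) x y.
Proof.
elim: t x y => [|t IH] x y; first by rewrite expr0 mxE ler0n.
rewrite exprS mxE; apply: sumr_ge0 => z _; exact: mulr_ge0.
Qed.

Lemma expPt0 t x y : 0 <= (Ptilde P d ^+ t) x y.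
Proof.
elim: t x y => [|t IH] x y; first by rewrite expr0 mxE ler0n.
rewrite exprS mxE; apply: sumr_ge0 => z _; exact: mulr_ge0 (Pt0 _ _) _.
Qed.

Lemma upper (c : R) : (forall z, 1 - d z <= c) -> forall t x y,
  (Ptilde P d ^+ t.+1) x y <= (1 - d x) * c ^+ t * (P ^+ t.+1) x y.
Proof.
move=> hc; elim=> [|t IH] x y.
  by rewrite !expr1 PtE expr0 mulr1.
rewrite exprS [P ^+ _.+2]exprS !mxE mulr_sumr; apply: ler_sum => z _.
have -> : (1 - d x) * c ^+ t.+1 * (P x z * (P ^+ t.+1) z y) =
  (1 - d x) * (P x z * (c * (c ^+ t * (P ^+ t.+1) z y))) by rewrite exprS; ring.
have -> : Ptilde P d x z * (Ptilde P d ^+ t.+1) z y =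
  (1 - d x) * (P x z * (Ptilde P d ^+ t.+1) z y) by rewrite PtE; ring.
apply: ler_wpM2l; first by rewrite subr_ge0; case/andP: (d01 x).
apply: ler_wpM2l => //.
apply: (le_trans (IH z y)); rewrite -mulrA; apply: ler_wpM2r.
  rewrite mulr_ge0 // ?expP0 // exprn_ge0 //; apply: le_trans (hc z).
  by rewrite subr_ge0; case/andP: (d01 z).
exact: hc.
Qed.

Lemma lower (c : R) : 0 <= c -> (forall z, c <= 1 - d z) -> forall t x y,
  (1 - d x) * c ^+ t * (P ^+ t.+1) x y <= (Ptilde P d ^+ t.+1) x y.
Proof.
move=> c0 hc; elim=> [|t IH] x y.
  by rewrite !expr1 PtE expr0 mulr1.
rewrite [Ptilde _ _ ^+ _]exprS [P ^+ _.+2]exprS !mxE mulr_sumr; apply: ler_sum => z _.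


have -> : (1 - d x) * c ^+ t.+1 * (P x z * (P ^+ t.+1) z y) =
  (1 - d x) * (P x z * (c * (c ^+ t * (P ^+ t.+1) z y))) by rewrite exprS; ring.
have -> : Ptilde P d x z * (Ptilde P d ^+ t.+1) z y =
  (1 - d x) * (P x z * (Ptilde P d ^+ t.+1) z y) by rewrite PtE; ring.
apply: ler_wpM2l; first by rewrite subr_ge0; case/andP: (d01 x).
apply: ler_wpM2l => //.
apply: le_trans (IH z y); rewrite -mulrA; apply: ler_wpM2r.
  by rewrite mulr_ge0 // ?expP0 // exprn_ge0.
exact: hc.
Qed.
End S.

Theorem lemma3 (R : realType) (n : nat) (e : rel 'I_n) (P : 'M[R]_n)
    (d : 'I_n -> R) :
  has_self_loops e ->
  right_stochastic P ->
  supported_on P e ->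
  (forall x, 0 <= d x <= 1) ->
  forall u w : 'I_n, u != w ->
  let m := \big[Num.min/(1 - d u)]_(x : 'I_n) (1 - d x) in
  let M := \big[Num.max/(1 - d u)]_(x : 'I_n) (1 - d x) in
  ((1 - d u)%:E * (\sum_(1 <= t <oo) (m ^+ t.-1 * (P ^+ t) u w)%:E) * (d w)%:E
     <= absorb_prob P d u w)%E /\
  (absorb_prob P d u w
     <= (1 - d u)%:E * (\sum_(1 <= t <oo) (M ^+ t.-1 * (P ^+ t) u w)%:E) * (d w)%:E)%E.
Proof.
move=> _ [P0 _] _ d01 u w uw m M.
have d1 x : 0 <= 1 - d x by rewrite subr_ge0; case/andP: (d01 x).
have dw0 : 0 <= d w by case/andP: (d01 w).
have m0 : 0 <= m by apply: le_bigmin.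
have mle z : m <= 1 - d z by apply: bigmin_le.
have Mge z : 1 - d z <= M by apply: le_bigmax.
have M0 : 0 <= M by apply: le_trans (Mge u).
have E (c : R) : 0 <= c ->
  ((1 - d u)%:E * (\sum_(1 <= t <oo) (c ^+ t.-1 * (P ^+ t) u w)%:E) * (d w)%:E
   = \sum_(1 <= t <oo) ((1 - d u) * (c ^+ t.-1 * (P ^+ t) u w) * d w)%:E)%E.
  move=> c0; rewrite -nneseriesZl; last first.
    by move=> i _; rewrite lee_fin mulr_ge0 // ?exprn_ge0 // expP0.
  rewrite muleC -nneseriesZl; last first.
    by move=> i _; rewrite -EFinM lee_fin !mulr_ge0 // ?exprn_ge0 // expP0.
  by apply: eq_eseriesr => i _; rewrite -!EFinM mulrC.
rewrite (E _ m0) (E _ M0) /absorb_prob; split; apply: lee_nneseries.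
- by move=> i _ _; rewrite lee_fin !mulr_ge0 // ?exprn_ge0 // expP0.
- move=> [|t] _; first by rewrite !expr0 !mxE (negbTE uw) !mulr0 mul0r ?mul0e.
  rewrite -EFinM lee_fin /= ler_wpM2r // mulrA.
  exact: (@lower _ _ _ _ P0 d01 _ m0 mle).
- by move=> i _ _; rewrite -EFinM lee_fin mulr_ge0 // expPt0.
- move=> [|t] _; first by rewrite !expr0 !mxE (negbTE uw) !mulr0 mul0r ?mul0e ?lexx.
  rewrite -EFinM lee_fin /= ler_wpM2r // mulrA.
  exact: (@upper _ _ _ _ P0 d01 _ Mge).
Qed.
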